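(* Let $\mathcal X$ be a countable space with the discrete metric and $\mathcal Y$ a Polish space. If a sequence $\{\mu_n\}_{n\in\mathbb N}$ of probability measures on $\mathcal X\times\mathcal Y$ converges setwise to a probability measure $\mu$ (i.e. $\mu_n(D)\to\mu(D)$ for every Borel $D\subset\mathcal X\times\mathcal Y$), then $\mu_n\to\mu$ in $\wp_I(\mathcal X\times\mathcal Y)$.
   Context: For a Polish space $\mathcal S$, $\wp(\mathcal S)$ denotes the Borel probability measures and $\wp_w(\mathcal S)$ this set with the weak-* topology (weakest topology making $\mu\mapsto\int g\,d\mu$ continuous for all bounded continuous $g$). For $\mu\in\wp(\mathcal X\times\mathcal Y)$, $\mu^{\mathcal X}$ is the marginal and $\mu(\cdot\mid x)$ a regular conditional distribution on $\mathcal Y$ given $x$. Let $\psi(\mu)\in\wp(\mathcal X\times\wp_w(\mathcal Y))$ be $\psi(\mu)(dx,d\zeta)=\delta_{\mu(\cdot\mid x)}(d\zeta)\mu^{\mathcal X}(dx)$. The topology of information on $\wp(\mathcal X\times\mathcal Y)$ is the coarsest topology making $\psi$ continuous into $\wp_w(\mathcal X\times\wp_w(\mathcal Y))$; $\wp_I(\mathcal X\times\mathcal Y)$ denotes $\wp(\mathcal X\times\mathcal Y)$ with it. Thus $\mu_n\to\mu$ in $\wp_I$ iff $\psi(\mu_n)\to\psi(\mu)$ weak-*. *)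

(* Defs.v *)
From HB Require Import structures.
From mathcomp Require Import all_boot all_order all_algebra.
From mathcomp Require Import all_classical all_reals all_analysis.
From mathcomp Require Import measurable_realfun.

Set Implicit Arguments.
Unset Strict Implicit.
Unset Printing Implicit Defensive.

Import Order.TTheory GRing.Theory Num.Theory.
Import numFieldNormedType.Exports.
Local Open Scope classical_set_scope.
Local Open Scope ring_scope.

Definition is_metric (R : realType) (T : Type) (d : T -> T -> R) : Prop :=
  [/\ forall x y, 0 <= d x y,
      forall x y, d x y = 0 <-> x = y,
      forall x y, d x y = d y x &
      forall x y z, d x z <= d x y + d y z].

Definition metric_induces_topology (R : realType) (T : topologicalType)
    (d : T -> T -> R) : Prop :=
  forall U : set T, open U <->
    (forall x, U x -> exists2 e : R, 0 < e & [set y | d x y < e] `<=` U).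

Definition metric_complete (R : realType) (T : Type) (d : T -> T -> R) : Prop :=
  forall u : nat -> T,
    (forall e : R, 0 < e -> exists N, forall m n, (N <= m)%N -> (N <= n)%N ->
        d (u m) (u n) < e) ->
    exists l, forall e : R, 0 < e -> exists N, forall n, (N <= n)%N -> d (u n) l < e.

Definition polish_space (R : realType) (T : topologicalType) : Prop :=
  (exists D : set T, countable D /\ closure D = [set: T]) /\
  (exists d : T -> T -> R,
      [/\ is_metric d, metric_induces_topology d & metric_complete d]).

Definition borel (T : ptopologicalType) := g_sigma_algebraType (@open T).

Section marginal.
Local Open Scope ereal_scope.
Context dX dY (X : measurableType dX) (Y : measurableType dY) (R : realType).
Variable mu : {measure set (X * Y)%type -> \bar R}.

Definition marginalX : set X -> \bar R := pushforward mu fst.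

Let marginalX0 : marginalX set0 = 0.
Proof. by rewrite /marginalX /pushforward preimage_set0 measure0. Qed.

Let marginalX_ge0 A : 0 <= marginalX A.
Proof. exact: measure_ge0. Qed.

Let marginalX_sigma_additive : semi_sigma_additive marginalX.
Proof.
move=> F mF tF mUF; rewrite /marginalX /pushforward preimage_bigcup.
apply: measure_semi_sigma_additive.
- by move=> n; rewrite -[X in measurable X]setTI; exact: measurable_fst.
- apply/trivIsetP => /= i j _ _ ij; rewrite -preimage_setI.
  by move/trivIsetP : tF => /(_ _ _ _ _ ij) ->//; rewrite preimage_set0.
- by rewrite -preimage_bigcup -[X in measurable X]setTI; exact: measurable_fst.
Qed.

HB.instance Definition _ := isMeasure.Build _ _ _
  marginalX marginalX0 marginalX_ge0 marginalX_sigma_additive.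
End marginal.

Definition gen_open (T : Type) (S : set (set T)) : set (set T) :=
  [set W | forall w, W w ->
     exists F : set (set T),
       [/\ finite_set F, F `<=` S, (\bigcap_(A in F) A) w &
           \bigcap_(A in F) A `<=` W]].

Definition bounded_continuous (R : realType) (T : topologicalType)
    (f : T -> R) : Prop :=
  continuous f /\ exists M : R, forall x, `|f x| <= M.

Section information_topology.
Local Open Scope ereal_scope.
Context (R : realType) (dX : measure_display) (X : measurableType dX)
        (Y : ptopologicalType).

Definition probY := probability (borel Y) R.

Definition weak_subbasis : set (set probY) :=
  [set U | exists f : Y -> R, bounded_continuous f /\
     exists V : set R, open V /\
       U = [set nu : probY | V (fine (\int[nu]_y (f y)%:E))]].

Definition weak_open : set (set probY) := gen_open weak_subbasis.

(* (every subset of X is open for the discrete metric)                  *)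
Definition prod_subbasis : set (set (X * probY)%type) :=
  [set W | (exists A : set X, W = A `*` [set: probY]) \/
           (exists U, weak_open U /\ W = [set: X] `*` U)].

Definition prod_open : set (set (X * probY)%type) := gen_open prod_subbasis.

Definition bounded_continuous_XP (g : X * probY -> R) : Prop :=
  (forall V : set R, open V -> prod_open (g @^-1` V)) /\
  exists M : R, forall z, (`|g z| <= M)%R.

Definition reg_cond_distr (mu : probability (X * borel Y)%type R)
    (kappa : X -> probY) : Prop :=
  (forall B : set (borel Y), measurable B ->
      measurable_fun [set: X] (fun x => kappa x B)) /\
  (forall (A : set X) (B : set (borel Y)), measurable A -> measurable B ->
      mu (A `*` B) = \int[marginalX mu]_(x in A) kappa x B).

(* \int g d psi(mu), where                                               *)
(*   psi(mu)(dx, dzeta) = delta_{kappa x}(dzeta) mu^X(dx)                 *)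
Definition psi_integral (mu : probability (X * borel Y)%type R)
    (kappa : X -> probY) (g : X * probY -> R) : \bar R :=
  \int[marginalX mu]_x (g (x, kappa x))%:E.

(* mu_n -> mu in the topology of information: psi(mu_n) -> psi(mu)     *)
(* weakly, for every choice of regular conditional distributions.        *)
Definition info_converges (mu_ : nat -> probability (X * borel Y)%type R)
    (mu : probability (X * borel Y)%type R) : Prop :=
  forall (kappa_ : nat -> X -> probY) (kappa : X -> probY),
    (forall n, reg_cond_distr (mu_ n) (kappa_ n)) ->
    reg_cond_distr mu kappa ->
    forall g, bounded_continuous_XP g ->
      (fun n => psi_integral (mu_ n) (kappa_ n) g) @ \oo -->
        psi_integral mu kappa g.

Definition setwise_converges (mu_ : nat -> probability (X * borel Y)%type R)
    (mu : probability (X * borel Y)%type R) : Prop :=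
  forall D : set (X * borel Y)%type, measurable D ->
    (fun n => mu_ n D) @ \oo --> mu D.

End information_topology.

(* Main.v *)
Set Warnings "-all".
Require Import Defs.
From mathcomp Require Import all_boot all_order all_algebra.
From mathcomp Require Import all_classical all_reals all_analysis.
From mathcomp Require Import measurable_realfun.
From mathcomp Require Import lra.
From mathcomp Require finmap.

Set Implicit Arguments.
Unset Strict Implicit.
Unset Printing Implicit Defensive.
Import Order.TTheory GRing.Theory Num.Theory.
Import numFieldNormedType.Exports.
Local Open Scope classical_set_scope.
Local Open Scope ring_scope.

Lemma ev_gt (R : realType) (u : nat -> \bar R) (l a : \bar R) :
  u @ \oo --> l -> (a < l)%E -> \forall n \near \oo, (a < u n)%E.
Proof. by move=> hu al; exact: (hu _ (open_ereal_gt' al)). Qed.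

Lemma cvge_bigsum (R : realType) (I : Type) (r : seq I)
  (Fn : nat -> I -> \bar R) (Fl : I -> \bar R) :
  (forall i, Fl i \is a fin_num) -> (forall i, Fn ^~ i @ \oo --> Fl i) ->
  (fun n => \sum_(i <- r) Fn n i)%E @ \oo --> (\sum_(i <- r) Fl i)%E.
Proof.
move=> finl cv; elim: r => [|i r IH].
  under eq_fun do rewrite big_nil; rewrite big_nil; exact: cvg_cst.
under eq_fun do rewrite big_cons; rewrite big_cons.
apply: cvgeD => //; apply: fin_num_adde_defr; exact: finl.
Qed.

Lemma fin_meas d (T : measurableType d) (R : realType)
  (m : {measure set T -> \bar R}) (A : set T) :
  (m setT < +oo)%E -> measurable A -> m A \is a fin_num.
Proof.
move=> mT mA; rewrite ge0_fin_numE// (le_lt_trans _ mT)// le_measure// inE//.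
Qed.


Lemma bint d (T : measurableType d) (R : realType)
  (m : {measure set T -> \bar R}) (f : T -> R) (M : R) :
  (m setT < +oo)%E -> measurable_fun setT f -> (forall x, `|f x| <= M) ->
  m.-integrable setT (EFin \o f).
Proof.
move=> mT mf fM; apply: measurable_bounded_integrable => //.
exists M; split; first exact: num_real.
by move=> M0 /ltW MM0 x _; apply: le_trans (fM x) MM0.
Qed.

Lemma Rint_fin d (T : measurableType d) (R : realType)
  (m : {measure set T -> \bar R}) (f : T -> R) (M : R) :
  (m setT < +oo)%E -> measurable_fun setT f -> (forall x, `|f x| <= M) ->
  (\int[m]_x (f x)%:E)%E = (\int[m]_x f x)%:E.
Proof.
move=> mT mf fM; rewrite /Rintegral fineK//.
exact: (integrable_fin_num _ (bint mT mf fM)).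
Qed.

Section setwise.
Context d (T : measurableType d) (R : realType).
Variables (nu_ : nat -> {measure set T -> \bar R}) (nu : {measure set T -> \bar R}).
Hypothesis finn : forall n, (nu_ n setT < +oo)%E.
Hypothesis fin : (nu setT < +oo)%E.
Hypothesis sw : forall A, measurable A -> (fun n => nu_ n A) @ \oo --> nu A.

Import HBNNSimple.

Lemma sint_cvg (h : {nnsfun T >-> R}) :
  (fun n => sintegral (nu_ n) h) @ \oo --> sintegral nu h.
Proof.
have fr : finite_set (range h) by exact: fimfunP.
under eq_fun do rewrite sintegralE (fsbig_finite _ _ fr).
rewrite sintegralE (fsbig_finite _ _ fr).
apply: cvge_bigsum => x.
  by rewrite fin_numM// fin_meas//; exact: measurable_sfunP.
apply: cvgeM.
- by rewrite mule_def_fin// fin_meas//; exact: measurable_sfunP.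
- exact: cvg_cst.
- by apply: sw; exact: measurable_sfunP.
Qed.


Lemma lsc (f : T -> R) (M : R) : measurable_fun setT f ->
  (forall x, 0 <= f x) -> (forall x, `|f x| <= M) ->
  forall a, a < \int[nu]_x f x -> \forall n \near \oo, a < \int[nu_ n]_x f x.
Proof.
move=> mf f0 fM a anu.
have : (a%:E < \int[nu]_x (f x)%:E)%E by rewrite (Rint_fin fin mf fM) lte_fin.
rewrite ge0_integralTE; last by move=> x; rewrite lee_fin.
move=> /ereal_sup_gt [_ [h hf <-] ah].
have := ev_gt (@sint_cvg h) ah.
apply: filterS => n ahn.
rewrite -lte_fin -(Rint_fin (finn n) mf fM) (lt_le_trans ahn)//.
rewrite ge0_integralTE => [|x]; last by rewrite lee_fin.
by apply: ereal_sup_ubound; exists h.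
Qed.


Lemma nn_cvg (f : T -> R) (M : R) : measurable_fun setT f ->
  (forall x, 0 <= f x) -> (forall x, `|f x| <= M) ->
  (fun n => \int[nu_ n]_x f x) @ \oo --> \int[nu]_x f x.
Proof.
move=> mf f0 fM.
pose g := fun x => M - f x.
have mg : measurable_fun setT g by apply: measurable_funB.
have g0 x : 0 <= g x.
  by rewrite subr_ge0 (le_trans _ (fM x))// ler_norm.
have gM x : `|g x| <= M by rewrite ger0_norm// lerBlDr lerDl.
have key (m : {measure set T -> \bar R}) : (m setT < +oo)%E ->
    \int[m]_x f x + \int[m]_x g x = M * fine (m setT).
  move=> mT; rewrite -RintegralD//; try exact: (bint mT _ fM); try exact: (bint mT _ gM).
  under eq_Rintegral do rewrite /g addrC subrK.
  by rewrite Rintegral_cst.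
have hc : (fun n => M * fine (nu_ n setT)) @ \oo --> M * fine (nu setT).
  apply: cvgM; first exact: cvg_cst.
  have := sw measurableT; rewrite -[nu setT]fineK ?fin_meas// => /fine_cvg.
  by [].
apply/(@cvgrPdist_lt _ R^o) => e e0.
have A1 : \forall n \near \oo, \int[nu]_x f x - e < \int[nu_ n]_x f x.
  by apply: (lsc mf f0 fM); rewrite ltrBlDr ltrDl.
have A2 : \forall n \near \oo, \int[nu]_x g x - e/2 < \int[nu_ n]_x g x.
  by apply: (lsc mg g0 gM); rewrite ltrBlDr ltrDl divr_gt0.
have A3 := (@cvgrPdist_lt _ R^o _ _ _ _ _).1 hc (e/2) (divr_gt0 e0 (ltr0Sn _ 1)).
near=> n.
have a1 : \int[nu]_x f x - e < \int[nu_ n]_x f x by near: n; exact: A1.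
have a2 : \int[nu]_x g x - e/2 < \int[nu_ n]_x g x by near: n; exact: A2.
have a3 : `|M * fine (nu setT) - M * fine (nu_ n setT)| < e/2 by near: n; exact: A3.
have k1 := key _ fin; have k2 := key _ (finn n).
move: a3; rewrite /= !ltr_norml => /andP[b1 b2]; apply/andP; split; lra.
Unshelve. all: by end_near.
Qed.

Lemma s_cvg (f : T -> R) (M : R) : measurable_fun setT f ->
  (forall x, `|f x| <= M) ->
  (fun n => \int[nu_ n]_x f x) @ \oo --> \int[nu]_x f x.
Proof.
move=> mf fM.
have mp : measurable_fun setT f^\+ by exact: measurable_funrpos.
have mn : measurable_fun setT f^\- by exact: measurable_funrneg.
have pnb x : `|f^\+ x| <= M /\ `|f^\- x| <= M.
  have e : f^\+ x + f^\- x = `|f x| by have := congr1 (fun h => h x) (funrposDneg f); exact.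
  have := funrpos_ge0 f x; have := funrneg_ge0 f x; have := fM x.
  rewrite -e => h1 h2 h3; rewrite !ger0_norm//; split; lra.
have pM x : `|f^\+ x| <= M by case: (pnb x).
have nM x : `|f^\- x| <= M by case: (pnb x).
have E (m : {measure set T -> \bar R}) : (m setT < +oo)%E ->
    \int[m]_x f x = \int[m]_x f^\+ x - \int[m]_x f^\- x.
  move=> mT; rewrite -RintegralB//; try exact: (bint mT _ pM); try exact: (bint mT _ nM).
  by rewrite -[in LHS](funrposBneg f).
under eq_fun do rewrite (E _ (finn _)).
rewrite (E _ fin); apply: cvgB.
- exact: (nn_cvg mp (@funrpos_ge0 _ _ f) pM).
- exact: (nn_cvg mn (@funrneg_ge0 _ _ f) nM).
Qed.

End setwise.

Lemma cont_meas (R : realType) (Y : ptopologicalType) (f : Y -> R) :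
  continuous f -> measurable_fun (setT : set (borel Y)) f.
Proof.
move=> /continuousP cf.
apply: (measurability _ (RGenOpens.measurableE R)).
move=> _ [_ [a [b ->]] <-]; rewrite setTI.
apply: sub_sigma_algebra; apply: cf; exact: interval_open.
Qed.

Section nb.
Import finmap.
Lemma near_bigcap (T : Type) (F : set (set T)) (u : nat -> T) :
  finite_set F -> (forall A, F A -> \forall n \near \oo, A (u n)) ->
  \forall n \near \oo, (\bigcap_(A in F) A) (u n).
Proof.
move=> /finite_fsetP [D ->] h.
have H : \forall n \near \oo, (\bigcap_(i in [set` D]%classic) (u @^-1` i)) n.
  by apply: filter_bigI => A hA; exact: h.
apply: filterS H => n H A DA; exact: H A DA.
Qed.
Lemma near_fin (I : choiceType) (G : set I) (Q : nat -> I -> Prop) :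
  finite_set G -> (forall i, G i -> \forall n \near \oo, Q n i) ->
  \forall n \near \oo, forall i, G i -> Q n i.
Proof.
move=> /finite_fsetP [D ->] h.
have H : \forall n \near \oo, (\bigcap_(i in [set` D]%classic) [set n | Q n i]) n.
  by apply: filter_bigI => i hi; exact: h.
apply: filterS H => n H i Di; exact: H i Di.
Qed.
End nb.

Lemma gen_open_near (T : Type) (S : set (set T)) W (u : nat -> T) w :
  gen_open S W -> W w ->
  (forall A, S A -> A w -> \forall n \near \oo, A (u n)) ->
  \forall n \near \oo, W (u n).
Proof.
move=> oW Ww h; have [F [fF FS Fw FW]] := oW w Ww.
apply: (filterS (fun n => @FW (u n))).
apply: near_bigcap fF _ => A FA; exact: h A (FS A FA) (Fw A FA).
Qed.

Section weak.
Context (R : realType) (dX : measure_display) (X : measurableType dX)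
        (Y : ptopologicalType).

Lemma weak_near (p_ : nat -> probY R Y) (p : probY R Y) :
  (forall f, bounded_continuous f ->
    (fun n => fine (\int[p_ n]_y (f y)%:E)%E) @ \oo --> fine (\int[p]_y (f y)%:E)%E) ->
  forall U, weak_open U -> U p -> \forall n \near \oo, U (p_ n).
Proof.
move=> hf U oU Up; apply: (gen_open_near oU Up) => A [f [bf [V [oV ->]]]] /= Vp.
apply: (hf f bf); exact: open_nbhs_nbhs.
Qed.

Lemma g_cvg (g : X * probY R Y -> R) : bounded_continuous_XP g ->
  forall x (p_ : nat -> probY R Y) (p : probY R Y),
  (forall f, bounded_continuous f ->
    (fun n => fine (\int[p_ n]_y (f y)%:E)%E) @ \oo --> fine (\int[p]_y (f y)%:E)%E) ->
  (fun n => g (x, p_ n)) @ \oo --> g (x, p).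
Proof.
move=> [cg _] x p_ p hf.
apply/(@cvgrPdist_lt _ R^o) => e e0.
have oV : open (ball (g (x, p)) e : set R^o) by exact: ball_open.
have Vc : (g @^-1` ball (g (x, p)) e) (x, p) by exact: ballxx.
have H := gen_open_near (u := fun n => (x, p_ n)) (cg _ oV) Vc.
have {}H : \forall n \near \oo, ball (g (x, p)) e (g (x, p_ n)).
  apply: H => A [[A' ->]|[U [oU ->]]] /= [] hx hp.
    by apply: nearW => n; split.
  have := weak_near hf oU hp; apply: filterS => n Un; by split.
by apply: filterS H => n.
Qed.

End weak.

Lemma ratio_cvg (R : realType) (k_ a_ b_ : nat -> \bar R) (k a b : \bar R) :
  (forall n, (k_ n * b_ n = a_ n)%E) -> (k * b = a)%E ->
  (forall n, k_ n \is a fin_num) -> (forall n, a_ n \is a fin_num) ->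
  (forall n, b_ n \is a fin_num) ->
  k \is a fin_num -> a \is a fin_num -> b \is a fin_num -> b != 0%E ->
  a_ @ \oo --> a -> b_ @ \oo --> b -> k_ @ \oo --> k.
Proof.
move=> kab0 kab fk fa fb fk0 fa0 fb0 b0 ha hb.
rewrite -(fineK fk0); apply/fine_cvgP; split; first by apply: nearW.
move: ha hb; rewrite -(fineK fa0) -(fineK fb0) => /fine_cvg ha /fine_cvg hb.
have fb0' : fine b != 0.
  by apply: contra b0 => /eqP h; rewrite -(fineK fb0) h.
have ek : fine k = fine a / fine b.
  by rewrite -kab fineM// mulfK.
have H : (fun n => fine (a_ n) * (fine (b_ n))^-1) @ \oo --> fine a / fine b.
  apply: cvgM => //; exact: cvgV.
rewrite ek; apply: (cvg_trans _ H); apply: near_eq_cvg.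
have HH := (@cvgrPdist_lt _ R^o _ _ _ _ _).1 hb `|fine b| (ltac:(by rewrite normr_gt0)).
near=> n.
have hn : `|fine b - fine (b_ n)| < `|fine b| by near: n; exact: HH.
have bn0 : fine (b_ n) != 0.
  by apply: contraTneq hn => ->; rewrite subr0 ltxx.
by rewrite /= -(kab0 n) fineM// mulfK.
Unshelve. all: by end_near.
Qed.

Lemma weak_of_setwise (R : realType) (Y : ptopologicalType)
  (p_ : nat -> probY R Y) (p : probY R Y) :
  (forall B, measurable B -> (fun n => p_ n B) @ \oo --> p B) ->
  forall f, bounded_continuous f ->
    (fun n => fine (\int[p_ n]_y (f y)%:E)%E) @ \oo --> fine (\int[p]_y (f y)%:E)%E.
Proof.
move=> hsw f [cf [M fM]].
apply: (@s_cvg _ _ _ (fun n => p_ n : {measure set _ -> \bar R}) p _ _ hsw _ M (cont_meas cf) fM).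
- by move=> n; rewrite (le_lt_trans (probability_le1 _ _)) ?ltry.
- by rewrite (le_lt_trans (probability_le1 _ _)) ?ltry.
Qed.

Lemma prob_fin (R : realType) d (T : measurableType d) (p : probability T R) A :
  measurable A -> p A \is a fin_num.
Proof.
move=> mA; rewrite ge0_fin_numE//; exact: (le_lt_trans (probability_le1 _ mA) (ltry _)).
Qed.

Lemma arith (R : realType) (a b c p e : R) : 0 < e ->
  a <= e / 4 -> b <= c -> - (e / 4) < p - c -> p < e / 4 -> a + b < e.
Proof. move=> *; lra. Qed.

Section main.
Context (R : realType) (dX : measure_display) (X : measurableType dX)
  (Y : ptopologicalType).
Hypothesis X_countable : countable [set: X].
Hypothesis X_discrete : forall A : set X, measurable A.
Variables (mu_ : nat -> probability (X * borel Y)%type R)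
  (mu : probability (X * borel Y)%type R).
Hypothesis sw : setwise_converges mu_ mu.
Variables (kappa_ : nat -> X -> probY R Y) (kappa : X -> probY R Y).
Hypothesis hk : forall n, reg_cond_distr (mu_ n) (kappa_ n).
Hypothesis hkap : reg_cond_distr mu kappa.

Lemma margE (m : probability (X * borel Y)%type R) A :
  marginalX m A = m (A `*` setT).
Proof.
rewrite /marginalX /pushforward; congr (m _).
by apply/seteqP; split => -[a b] /=; [move=> ?; split | case].
Qed.

Lemma marg_T (m : probability (X * borel Y)%type R) : marginalX m setT = 1%E.
Proof. by rewrite margE setXTT probability_setT. Qed.

Lemma marg_fin (m : probability (X * borel Y)%type R) :
  (marginalX m setT < +oo)%E.
Proof. by rewrite marg_T ltry. Qed.

Lemma marg_le1 (m : probability (X * borel Y)%type R) A :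
  fine (marginalX m A) <= 1.
Proof.
rewrite -lee_fin fineK ?fin_meas ?marg_fin//.
by rewrite -(marg_T m) le_measure// inE.
Qed.

Lemma marg_sw A : (fun n => marginalX (mu_ n) A) @ \oo --> marginalX mu A.
Proof.
under eq_fun do rewrite margE; rewrite margE.
apply: sw; apply: measurableX => //.
Qed.

Lemma singE (m : probability (X * borel Y)%type R) (kap : X -> probY R Y) :
  reg_cond_distr m kap -> forall x B, measurable B ->
  m ([set x] `*` B) = (kap x B * marginalX m [set x])%E.
Proof.
move=> [_ hm] x B mB; rewrite hm//.
rewrite (eq_integral (fun=> kap x B)); last by move=> y; rewrite inE => ->.
by rewrite integral_cst.
Qed.

Lemma kap_cvg x : marginalX mu [set x] != 0%E ->
  forall B, measurable B -> (fun n => kappa_ n x B) @ \oo --> kappa x B.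
Proof.
move=> hx B mB.
have mxB : measurable ([set x] `*` B) by apply: measurableX.
apply: (@ratio_cvg R (fun n => kappa_ n x B) (fun n => mu_ n ([set x] `*` B))
  (fun n => marginalX (mu_ n) [set x]) (kappa x B) (mu ([set x] `*` B))
  (marginalX mu [set x])) => //.
- by move=> n; rewrite (singE (hk n)).
- by rewrite (singE hkap).
- by move=> n; exact: prob_fin.
- by move=> n; exact: prob_fin.
- by move=> n; rewrite fin_meas// marg_fin.
- exact: prob_fin.
- exact: prob_fin.
- by rewrite fin_meas// marg_fin.
- exact: sw.
- exact: marg_sw.
Qed.

Lemma meas_all (f : X -> R) : measurable_fun setT f.
Proof. by move=> _ B _; exact: X_discrete. Qed.

Lemma bintD (m : {measure set X -> \bar R}) (D : set X) (f : X -> R) (M : R) :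
  (m setT < +oo)%E -> (forall x, `|f x| <= M) -> m.-integrable D (EFin \o f).
Proof.
move=> mT fM; apply: (integrableS measurableT (X_discrete D)) => //.
exact: (bint mT (meas_all f) fM).
Qed.

Lemma null_N0 : marginalX mu [set x | marginalX mu [set x] = 0%E] = 0%E.
Proof.
set P0 := marginalX mu.
have [enc encI] := countable_injP _ X_countable.
pose S k := [set x | enc x = k /\ P0 [set x] = 0%E].
have -> : [set x | P0 [set x] = 0%E] = \bigcup_k S k.
  apply/seteqP; split => [x hx|x [k _ [_ hx]]]//; by exists (enc x).
apply/negligibleP; first exact: X_discrete.
apply: negligible_bigcup => k; apply/negligibleP; first exact: X_discrete.
have [[x0 [e0 z0]]|ne] := pselect (exists x, S k x).
  apply/eqP; rewrite eq_le measure_ge0 andbT -z0 le_measure// ?inE//.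
  move=> y [ey _]; apply: encI; rewrite ?inE//; by rewrite ey e0.
rewrite (_ : S k = set0) ?measure0//; apply/seteqP; split => // y Sy.
by apply: ne; exists y.
Qed.

Lemma outer (d_ : nat -> X -> R) (K : R) : (forall n x, 0 <= d_ n x <= K) ->
  (forall x, marginalX mu [set x] != 0%E -> d_ ^~ x @ \oo --> 0) ->
  (fun n => \int[marginalX (mu_ n)]_x d_ n x) @ \oo --> 0.
Proof.
move=> dK dcv.
set P0 := marginalX mu.
have [enc encI] := countable_injP _ X_countable.
pose N0 := [set x | P0 [set x] = 0%E].
pose G k := [set x | (enc x < k)%N] `&` ~` N0.
have finG k : finite_set (G k).
  apply: (@sub_finite_set _ _ (enc @^-1` `I_k)); first by move=> x [].
  apply: finite_preimage; last exact: finite_II.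
  by move=> a b _ _; apply: encI; rewrite inE.
have cG : (fun k => P0 (~` G k)) @ \oo --> 0%E.
  have -> : 0%E = P0 (\bigcap_k ~` G k).
    rewrite -null_N0; congr (P0 _); apply/seteqP; split => x.
      by move=> N0x k _; rewrite /G setCI setCK; right.
    move=> /(_ (enc x).+1 I); rewrite /G setCI setCK => -[]//=.
  apply: nonincreasing_cvg_mu => //.
  - by rewrite (le_lt_trans _ (marg_fin mu))// le_measure// inE.
  - by move=> n m nm; rewrite subsetEset => x; rewrite /G !setCI !setCK => -[]
      /= h; [left => hn; apply: h; exact: leq_trans hn nm | right].
have K0 : 0 <= K by case/andP: (dK 0%N point) => h1 h2; exact: le_trans h2.
pose K1 := K + 1.
have K10 : 0 < K1 by rewrite /K1 ltr_wpDl.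
apply/(@cvgrPdist_lt _ R^o) => e e0.
have e40 : 0 < e / 4 by rewrite divr_gt0.
have : (fun k => K1 * fine (P0 (~` G k))) @ \oo --> 0.
  rewrite -(mulr0 K1); apply: cvgM; first exact: cvg_cst.
  exact: (@fine_cvg _ _ _ _ (fun k => P0 (~` G k)) 0 cG).
move/(@cvgrPdist_lt _ R^o) /(_ (e/4) e40) => [k0 _ Hk0].
have {Hk0} Hk0 := Hk0 k0 (leqnn k0); rewrite /= sub0r normrN in Hk0.
set G0 := G k0 in Hk0.
have A1 : \forall n \near \oo, forall x, G0 x -> d_ n x < e / 4.
  apply: near_fin (finG k0) _ => x [_ /= hx].
  have := dcv x (ltac:(by apply/eqP)).
  move/(@cvgrPdist_lt _ R^o) /(_ (e/4) e40); apply: filterS => n.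
  by rewrite /= sub0r normrN => /(le_lt_trans (ler_norm _)).
have A2 : (fun n => K1 * fine (marginalX (mu_ n) (~` G0))) @ \oo -->
    K1 * fine (P0 (~` G0)).
  apply: cvgM; first exact: cvg_cst.
  apply: fine_cvg; rewrite fineK; first exact: marg_sw.
  by rewrite fin_meas// marg_fin.
have {}A2 := (@cvgrPdist_lt _ R^o _ _ _ _ _).1 A2 (e/4) e40.
near=> n.
have a1 : forall x, G0 x -> d_ n x < e / 4 by near: n; exact: A1.
have a2 : `|K1 * fine (P0 (~` G0)) - K1 * fine (marginalX (mu_ n) (~` G0))| < e/4.
  by near: n; exact: A2.
set Pn := marginalX (mu_ n).
have dB x : `|d_ n x| <= K by case/andP: (dK n x) => h1 h2; rewrite ger0_norm.
have Pfin : (Pn setT < +oo)%E := marg_fin (mu_ n).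
have split : \int[Pn]_x d_ n x =
    \int[Pn]_(x in G0) d_ n x + \int[Pn]_(x in ~` G0) d_ n x.
  rewrite -Rintegral_setU ?setUv//; first exact: (bintD _ Pfin dB).
  by apply/disj_setPLR => x Gx; apply.
have b1 : \int[Pn]_(x in G0) d_ n x <= e / 4.
  apply: (le_trans (y := \int[Pn]_(x in G0) (e / 4))).
    apply: le_Rintegral => //; first exact: (bintD _ Pfin dB).
      apply: (bintD _ Pfin (M := e / 4)) => x; rewrite ger0_norm //; exact: ltW.
    by move=> x Gx; apply/ltW/a1.
  rewrite Rintegral_cst//; apply: ler_piMr; first exact: ltW.
  exact: marg_le1.
have b2 : \int[Pn]_(x in ~` G0) d_ n x <= K1 * fine (Pn (~` G0)).
  rewrite -Rintegral_cst//.
  apply: le_Rintegral => //; first exact: (bintD _ Pfin dB).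
    apply: (bintD _ Pfin (M := K1)) => x; rewrite ger0_norm //; exact: ltW.
  move=> x _; case/andP: (dK n x) => _ h; by rewrite /K1 (le_trans h)// lerDl.
have i0 : 0 <= \int[Pn]_x d_ n x.
  by apply: Rintegral_ge0 => x _; case/andP: (dK n x).
rewrite sub0r normrN ger0_norm// split.
move: a2; rewrite ltr_norml => /andP[c1 c2].
move: Hk0; rewrite ger0_norm; last by rewrite mulr_ge0 ?fine_ge0 // ltW.
move=> hk0.
rewrite /Pn in b1 b2 *; exact: (arith e0 b1 b2 c1 hk0).
Unshelve. all: by end_near.
Qed.

Lemma main_res g : bounded_continuous_XP g ->
  (fun n => psi_integral (mu_ n) (kappa_ n) g) @ \oo -->
    psi_integral mu kappa g.
Proof.
move=> bcg; have [_ [M gM]] := bcg.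
rewrite /psi_integral.
pose h_ n x := g (x, kappa_ n x); pose h x := g (x, kappa x).
have hM n x : `|h_ n x| <= M by exact: gM.
have hM' x : `|h x| <= M by exact: gM.
rewrite (Rint_fin (marg_fin mu) (meas_all h) hM').
under eq_fun do rewrite (Rint_fin (marg_fin (mu_ _)) (meas_all (h_ _)) (hM _)).
apply/fine_cvgP; split; first exact: nearW.
rewrite /comp /=.
have dM n x : `|h_ n x - h x| <= M + M.
  by rewrite (le_trans (ler_normB _ _))// lerD.
have E n : \int[marginalX (mu_ n)]_x h_ n x =
    \int[marginalX (mu_ n)]_x h x + \int[marginalX (mu_ n)]_x (h_ n x - h x).
  rewrite -RintegralD//; first by apply: eq_Rintegral => x _; rewrite addrC subrK.
    exact: (bint (marg_fin _) (meas_all _) hM').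
  exact: (bint (marg_fin _) (meas_all _) (dM n)).
under eq_fun do rewrite E.
rewrite -[\int[marginalX mu]_x h x]addr0; apply: cvgD.
  apply: (@s_cvg _ _ _ (fun n => marginalX (mu_ n)) (marginalX mu) _ _ _ _ M
    (meas_all h) hM').
  - by move=> n; exact: marg_fin.
  - exact: marg_fin.
  - move=> A _; exact: marg_sw.
have hd : (fun n => \int[marginalX (mu_ n)]_x `|h_ n x - h x|) @ \oo --> 0.
  apply: (@outer _ (M + M)).
    by move=> n x; rewrite normr_ge0 dM.
  move=> x hx.
  have := @g_cvg R dX X Y g bcg x (fun n => kappa_ n x) (kappa x)
    (weak_of_setwise (kap_cvg hx)).
  move/(@cvgrPdist_lt _ R^o) => H; apply/(@cvgrPdist_lt _ R^o) => e e0.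
  apply: filterS (H e e0) => n.
  by rewrite /= sub0r normrN normr_id distrC.
apply/(@cvgrPdist_lt _ R^o) => e e0.
apply: filterS ((@cvgrPdist_lt _ R^o _ _ _ _ _).1 hd e e0) => n /=.
rewrite !sub0r !normrN; apply: le_lt_trans.
rewrite [X in _ <= X]ger0_norm; last by apply: Rintegral_ge0.
apply: le_normr_Rintegral => //.
exact: (bint (marg_fin _) (meas_all _) (dM n)).
Qed.

End main.

Theorem theorem4 (R : realType) (dX : measure_display) (X : measurableType dX)
    (Y : ptopologicalType)
    (X_countable : countable [set: X])
    (X_discrete : forall A : set X, measurable A)
    (Y_polish : polish_space R Y)
    (mu_ : nat -> probability (X * borel Y)%type R)
    (mu : probability (X * borel Y)%type R) :
  setwise_converges mu_ mu -> info_converges mu_ mu.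
Proof.
move=> sw kappa_ kappa hk hkap g bcg.
exact: (main_res X_countable X_discrete sw hk hkap bcg).
Qed.
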